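(* Let $r>0$. On the range $s>|r-1|$, the functional equation $f_1(s,r)+f_1(s+2r,r)=\frac{1}{s+1}$ has a unique solution satisfying $\lim_{s\to\infty}f_1(s,r)=0$, namely $$f_1(s,r)=\dfrac{1}{2-2r+2s+2\,\mathop{K}\limits_{n=1}^{\infty}\left(\dfrac{n^2r^2}{1-r+s}\right)},$$ and the functional equation $f_2(s,r)+f_2(s+2r,r)=\frac{1}{s+2r-1}$ has a unique solution satisfying $\lim_{s\to\infty}f_2(s,r)=0$, namely $$f_2(s,r)=\dfrac{1}{2r-2+2s+2\,\mathop{K}\limits_{n=1}^{\infty}\left(\dfrac{n^2r^2}{r-1+s}\right)}.$$
   Context: $\mathop{K}_{n=1}^{\infty}\left(\frac{a_n}{b}\right)$ denotes the continued fraction $\cfrac{a_1}{b+\cfrac{a_2}{b+\cdots}}$ (limit of convergents). *)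

(* Defs.v *)
From Stdlib Require Import Reals.
From Coquelicot Require Import Coquelicot.
Open Scope R_scope.

Fixpoint cf_tail (a : nat -> R) (b : R) (k m : nat) : R :=
  match m with
  | O => 0
  | S m' => a k / (b + cf_tail a b (S k) m')
  end.

(* N-th convergent of K_{n=1}^oo (a_n / b). *)
Definition cf_conv (a : nat -> R) (b : R) (N : nat) : R := cf_tail a b 1 N.

(* Value of the continued fraction: limit of the convergents
   (meaningful when ex_finite_lim_seq holds). *)
Definition cf_val (a : nat -> R) (b : R) : R := real (Lim_seq (cf_conv a b)).

Definition num_seq (r : R) : nat -> R := fun n => (INR n) ^ 2 * r ^ 2.

Definition f1_sol (r s : R) : R :=
  1 / (2 - 2 * r + 2 * s + 2 * cf_val (num_seq r) (1 - r + s)).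

Definition f2_sol (r s : R) : R :=
  1 / (2 * r - 2 + 2 * s + 2 * cf_val (num_seq r) (r - 1 + s)).

(* Main.v *)
Require Import Defs.
From Stdlib Require Import Reals Lra Lia.
From Coquelicot Require Import Coquelicot.
Open Scope R_scope.

Fixpoint rec2 (r b u0 u1 : R) (n : nat) : R * R :=
  match n with
  | O => (u0, u1)
  | S n' => let pr := rec2 r b u0 u1 n' in
            (snd pr, b * snd pr + (INR n' + 1)^2 * r^2 * fst pr)
  end.
Definition sq r b u0 u1 n := fst (rec2 r b u0 u1 n).

Definition sol (r b : R) (Z : nat -> R) :=
  forall n, Z (S (S n)) = b * Z (S n) + (INR n + 1)^2 * r^2 * Z n.

Lemma sq_sol r b u0 u1 : sol r b (sq r b u0 u1).
Proof. intro n. unfold sq. simpl. reflexivity. Qed.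
Lemma sq_0 r b u0 u1 : sq r b u0 u1 0 = u0. Proof. reflexivity. Qed.
Lemma sq_1 r b u0 u1 : sq r b u0 u1 1 = u1. Proof. reflexivity. Qed.

Definition U r b := sq r b 1 b.
Definition V r b := sq r b 0 1.

Fixpoint Pa (r : R) (n : nat) : R :=
  match n with O => 1 | S n' => Pa r n' * ((INR n' + 1)^2 * r^2) end.

Lemma Pa_pos r n : 0 < r -> 0 < Pa r n.
Proof.
  intro hr. induction n; cbn [Pa]. lra.
  apply Rmult_lt_0_compat; auto.
  apply Rmult_lt_0_compat; apply pow_lt; try lra.
  pose proof (pos_INR n); lra.
Qed.

Lemma sol_nonneg r b Z : 0 < b -> sol r b Z -> 0 <= Z 0%nat -> 0 <= Z 1%nat ->
  forall n, 0 <= Z n.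
Proof.
  intros hb hs h0 h1.
  assert (forall n, 0 <= Z n /\ 0 <= Z (S n)).
  { induction n. split; auto.
    destruct IHn as [A B]. split; auto. rewrite hs.
    apply Rplus_le_le_0_compat. apply Rmult_le_pos; lra.
    apply Rmult_le_pos; auto. apply Rmult_le_pos; apply pow2_ge_0. }
  intro n; apply H.
Qed.

Lemma sol_pos r b Z : 0 < b -> sol r b Z -> 0 <= Z 0%nat -> 0 < Z 1%nat ->
  forall n, 0 < Z (S n).
Proof.
  intros hb hs h0 h1.
  assert (forall n, 0 <= Z n /\ 0 < Z (S n)).
  { induction n. split; auto.
    destruct IHn as [A B]. split; [lra|]. rewrite hs.
    apply Rplus_lt_le_0_compat. apply Rmult_lt_0_compat; lra.
    apply Rmult_le_pos; auto. apply Rmult_le_pos; apply pow2_ge_0. }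
  intro n; apply H.
Qed.

Lemma cas r b n : U r b (S n) * V r b n - U r b n * V r b (S n) = - (-1)^n * Pa r n.
Proof.
  induction n.
  - unfold U, V. rewrite !sq_1, !sq_0. simpl. ring.
  - unfold U, V in *. rewrite !(sq_sol r b _ _ n).
    replace (-(-1)^(S n) * Pa r (S n)) with
      ((INR n + 1)^2 * r^2 * (- (-(-1)^n * Pa r n))) by (simpl; ring).
    rewrite <- IHn. ring.
Qed.
Fixpoint cfw (a : nat -> R) (b : R) (k m : nat) (w : R) : R :=
  match m with
  | O => w
  | S m' => a k / (b + cfw a b (S k) m' w)
  end.

Lemma cfw_tail a b k m : cf_tail a b k m = cfw a b k m 0.
Proof. revert k; induction m; intro k; simpl; auto. rewrite IHm; auto. Qed.

Lemma cfw_snoc a b m : forall k w,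
  cfw a b k (S m) w = cfw a b k m (a (k + m)%nat / (b + w)).
Proof.
  induction m; intros k w.
  - simpl. rewrite Nat.add_0_r. reflexivity.
  - change (cfw a b k (S (S m)) w) with (a k / (b + cfw a b (S k) (S m) w)).
    rewrite IHm. simpl. rewrite Nat.add_succ_r. reflexivity.
Qed.

Lemma U_pos r b n : 0 < b -> 0 < U r b n.
Proof.
  intro hb. destruct n. unfold U; rewrite sq_0; lra.
  apply sol_pos with (r:=r) (b:=b); try apply sq_sol; unfold U;
   rewrite ?sq_0, ?sq_1; lra.
Qed.
Lemma V_pos r b n : 0 < b -> 0 < V r b (S n).
Proof.
  intro hb. apply sol_pos with (r:=r) (b:=b); try apply sq_sol; unfold V;
   rewrite ?sq_0, ?sq_1; lra.
Qed.
Lemma V_nn r b n : 0 < b -> 0 <= V r b n.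
Proof.
  intro hb. apply sol_nonneg with (r:=r) (b:=b); try apply sq_sol; unfold V;
   rewrite ?sq_0, ?sq_1; lra.
Qed.
Lemma UbV r b n : 0 < b -> b * V r b n <= U r b n.
Proof.
  intro hb. set (Z := fun n => U r b n - b * V r b n).
  assert (0 <= Z n); [|unfold Z in *; lra].
  apply sol_nonneg with (r:=r) (b:=b); auto.
  - intro k. unfold Z, U, V. rewrite !sq_sol. ring.
  - unfold Z, U, V; rewrite ?sq_0; lra.
  - unfold Z, U, V; rewrite ?sq_1; lra.
Qed.

Lemma conv_formula r b (hb : 0 < b) : forall N w, 0 <= w ->
  b + cfw (num_seq r) b 1 N w =
  (U r b (S N) + w * U r b N) / (V r b (S N) + w * V r b N).
Proof.
  induction N; intros w hw.
  - simpl cfw. unfold U, V. rewrite !sq_0, !sq_1. rewrite Rmult_0_r, Rplus_0_r, Rmult_1_r. field.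
  - rewrite cfw_snoc.
    assert (hc : 0 <= num_seq r (1 + N) / (b + w)).
    { unfold num_seq. apply Rmult_le_pos. apply Rmult_le_pos; apply pow2_ge_0.
      left; apply Rinv_0_lt_compat; lra. }
    rewrite (IHN _ hc).
    pose proof (V_pos r b N hb). pose proof (V_nn r b N hb).
    pose proof (V_pos r b (S N) hb).
    assert (0 <= num_seq r (1 + N)).
    { unfold num_seq. apply Rmult_le_pos; apply pow2_ge_0. }
    unfold U, V in *. rewrite !(sq_sol r b _ _ N).
    replace (num_seq r (1 + N)) with ((INR N + 1) ^ 2 * r ^ 2) in *.
    2:{ unfold num_seq. rewrite plus_INR. simpl INR. f_equal. f_equal. ring. }
    set (c := (INR N + 1) ^ 2 * r ^ 2) in *.
    set (v0 := sq r b 0 1 N) in *. set (v1 := sq r b 0 1 (S N)) in *.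
    assert (0 < v1 + c / (b + w) * v0).
    { assert (0 <= c / (b+w) * v0) by (apply Rmult_le_pos; auto). lra. }
    assert (0 < b * v1 + c * v0 + w * v1).
    { assert (0 <= c * v0) by (apply Rmult_le_pos; auto).
      assert (0 < b*v1) by (apply Rmult_lt_0_compat; auto).
      assert (0 <= w*v1) by (apply Rmult_le_pos; lra). lra. }
    field. repeat split; lra.
Qed.
Lemma Pa_S r n : Pa r (S n) = Pa r n * ((INR n + 1)^2 * r^2).
Proof. reflexivity. Qed.

Definition xx r b N := cf_conv (num_seq r) b N.

Lemma xU r b N : 0 < b -> b + xx r b N = U r b (S N) / V r b (S N).
Proof.
  intro hb. unfold xx, cf_conv. rewrite cfw_tail, conv_formula; auto; [|lra].
  rewrite !Rmult_0_l, !Rplus_0_r. reflexivity.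
Qed.

Lemma xx_nn r b N : 0 < b -> 0 <= xx r b N.
Proof.
  intro hb. pose proof (xU r b N hb). pose proof (UbV r b (S N) hb).
  pose proof (V_pos r b N hb).
  assert (b <= U r b (S N) / V r b (S N)).
  { apply Rmult_le_reg_r with (V r b (S N)); auto.
    unfold Rdiv. rewrite Rmult_assoc, Rinv_l; lra. }
  lra.
Qed.

Definition ee r b N := V r b (S (S N)) * V r b (S N) / Pa r (S N).

Lemma ee_pos r b N : 0 < r -> 0 < b -> 0 < ee r b N.
Proof.
  intros hr hb. unfold ee. apply Rdiv_lt_0_compat.
  apply Rmult_lt_0_compat; apply V_pos; auto. apply Pa_pos; auto.
Qed.

Lemma xx_diff r b N : 0 < r -> 0 < b -> xx r b (S N) - xx r b N = (-1)^N / ee r b N.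
Proof.
  intros hr hb.
  pose proof (xU r b N hb). pose proof (xU r b (S N) hb).
  pose proof (V_pos r b N hb). pose proof (V_pos r b (S N) hb).
  pose proof (Pa_pos r (S N) hr).
  replace (xx r b (S N) - xx r b N) with
    ((U r b (S (S N)) * V r b (S N) - U r b (S N) * V r b (S (S N)))
     / (V r b (S (S N)) * V r b (S N))).
  2:{ replace (xx r b (S N) - xx r b N) with ((b + xx r b (S N)) - (b + xx r b N)) by ring.
      rewrite H, H0. field. lra. }
  rewrite cas. unfold ee. simpl pow. field. repeat split; lra.
Qed.

Lemma ee_incr r b N : 0 < r -> 0 < b ->
  ee r b (S N) - ee r b N = b * V r b (S (S N)) ^ 2 / Pa r (S (S N)).
Proof.
  intros hr hb.
  pose proof (V_pos r b N hb). pose proof (V_pos r b (S N) hb).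
  pose proof (Pa_pos r (S N) hr). unfold ee, V in *.
  rewrite (sq_sol r b 0 1 (S N)). rewrite (Pa_S r (S N)).
  assert (0 < (INR (S N) + 1) ^ 2 * r ^ 2).
  { pose proof (pos_INR (S N)). apply Rmult_lt_0_compat; apply pow_lt; lra. }
  pose proof (pos_INR (S N)). field. repeat split; lra.
Qed.

Lemma ee_incr2 r b N : 0 < r -> 0 < b ->
  ee r b (S (S N)) - ee r b N - 2 * b * ee r b (S N) / ((INR N + 3) * r)
  = b * (V r b (S (S (S N))) - (INR N + 3) * r * V r b (S (S N))) ^ 2
      / Pa r (S (S (S N))).
Proof.
  intros hr hb.
  pose proof (V_pos r b N hb). pose proof (V_pos r b (S N) hb).
  pose proof (Pa_pos r (S N) hr). unfold ee, V in *.
  rewrite !(sq_sol r b 0 1 (S (S N))), !(sq_sol r b 0 1 (S N)).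
  rewrite (Pa_S r (S (S N))), (Pa_S r (S N)).
  rewrite !S_INR.
  pose proof (pos_INR N).
  assert (0 < (INR N + 1 + 1) ^ 2 * r ^ 2).
  { apply Rmult_lt_0_compat; apply pow_lt; lra. }
  assert (0 < (INR N + 1 + 1 + 1) ^ 2 * r ^ 2).
  { apply Rmult_lt_0_compat; apply pow_lt; lra. }
  field. repeat split; lra.
Qed.
Lemma ee_mono r b N : 0 < r -> 0 < b -> ee r b N <= ee r b (S N).
Proof.
  intros hr hb. pose proof (ee_incr r b N hr hb).
  assert (0 <= b * V r b (S (S N)) ^ 2 / Pa r (S (S N))).
  { apply Rmult_le_pos. apply Rmult_le_pos. lra. apply pow2_ge_0.
    left; apply Rinv_0_lt_compat, Pa_pos; auto. }
  lra.
Qed.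

Lemma ee_mono_le r b N M : 0 < r -> 0 < b -> (N <= M)%nat -> ee r b N <= ee r b M.
Proof.
  intros hr hb h. induction h. lra.
  pose proof (ee_mono r b m hr hb). lra.
Qed.

Lemma ee_step2 r b N : 0 < r -> 0 < b ->
  ee r b N + (2 * b * ee r b 0 / r) / (INR N + 3) <= ee r b (S (S N)).
Proof.
  intros hr hb. pose proof (ee_incr2 r b N hr hb).
  assert (0 <= b * (V r b (S (S (S N))) - (INR N + 3) * r * V r b (S (S N))) ^ 2
      / Pa r (S (S (S N)))).
  { apply Rmult_le_pos. apply Rmult_le_pos. lra. apply pow2_ge_0.
    left; apply Rinv_0_lt_compat, Pa_pos; auto. }
  assert (ee r b 0 <= ee r b (S N)) by (apply ee_mono_le; auto; lia).
  pose proof (pos_INR N).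
  assert ((2 * b * ee r b 0 / r) / (INR N + 3) <= 2 * b * ee r b (S N) / ((INR N + 3) * r)).
  { unfold Rdiv. rewrite Rinv_mult.
    replace (2 * b * ee r b 0 * / r * / (INR N + 3)) with
      ((2 * b * / r * / (INR N + 3)) * ee r b 0) by ring.
    replace (2 * b * ee r b (S N) * (/ (INR N + 3) * / r)) with
      ((2 * b * / r * / (INR N + 3)) * ee r b (S N)) by ring.
    apply Rmult_le_compat_l; auto.
    assert (0 < / r) by (apply Rinv_0_lt_compat; lra).
    assert (0 < / (INR N + 3)) by (apply Rinv_0_lt_compat; lra).
    repeat apply Rmult_le_pos; lra. }
  lra.
Qed.

Lemma ee_block r b n j : 0 < r -> 0 < b -> (j <= n)%nat ->
  ee r b (2 * n) + INR j * (2 * b * ee r b 0 / r) / (4 * INR n + 1)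
  <= ee r b (2 * n + 2 * j).
Proof.
  intros hr hb. set (k := 2 * b * ee r b 0 / r).
  assert (hk : 0 < k).
  { unfold k. apply Rdiv_lt_0_compat; auto.
    pose proof (ee_pos r b 0 hr hb). nra. }
  induction j; intro hj.
  - simpl INR. rewrite Nat.add_0_r. unfold Rdiv. lra.
  - replace (2 * n + 2 * S j)%nat with (S (S (2 * n + 2 * j))) by lia.
    pose proof (ee_step2 r b (2 * n + 2 * j) hr hb). fold k in H.
    specialize (IHj ltac:(lia)).
    assert (k / (4 * INR n + 1) <= k / (INR (2 * n + 2 * j) + 3)).
    { rewrite plus_INR, !mult_INR. simpl INR.
      assert (INR (S j) <= INR n) by (apply le_INR; lia).
      rewrite S_INR in H0. pose proof (pos_INR j).
      apply Rmult_le_compat_l; [lra|].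
      apply Rinv_le_contravar; lra. }
    rewrite S_INR.
    replace ((INR j + 1) * k / (4 * INR n + 1)) with
      (INR j * k / (4 * INR n + 1) + k / (4 * INR n + 1)) by (field;
        pose proof (pos_INR n); lra).
    lra.
Qed.

Lemma ee_double r b k : 0 < r -> 0 < b ->
  ee r b 2 + INR k * ((2 * b * ee r b 0 / r) / 5) <= ee r b (2 * 2 ^ k).
Proof.
  intros hr hb. set (c := 2 * b * ee r b 0 / r).
  assert (hc : 0 < c).
  { unfold c. apply Rdiv_lt_0_compat; auto.
    pose proof (ee_pos r b 0 hr hb). nra. }
  induction k.
  - simpl. lra.
  - assert (1 <= 2 ^ k)%nat.
    { clear. induction k; simpl; lia. }
    pose proof (ee_block r b (2 ^ k) (2 ^ k) hr hb (le_n _)). fold c in H0.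
    replace (2 * 2 ^ k + 2 * 2 ^ k)%nat with (2 * 2 ^ S k)%nat in H0 by (simpl; lia).
    assert (c / 5 <= INR (2 ^ k) * c / (4 * INR (2 ^ k) + 1)).
    { apply le_INR in H. simpl INR in H.
      unfold Rdiv. apply Rmult_le_reg_r with (5 * (4 * INR (2 ^ k) + 1)). lra.
      field_simplify; try lra. nra. }
    rewrite S_INR. lra.
Qed.
Lemma ee_unbounded r b M : 0 < r -> 0 < b ->
  exists N0, forall N, (N0 <= N)%nat -> M < ee r b N.
Proof.
  intros hr hb. set (c := 2 * b * ee r b 0 / r).
  assert (hc : 0 < c).
  { unfold c. apply Rdiv_lt_0_compat; auto.
    pose proof (ee_pos r b 0 hr hb). nra. }
  destruct (INR_archimed (c / 5) (M - ee r b 2)) as [k hk]. lra.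
  exists (2 * 2 ^ k)%nat. intros N hN.
  pose proof (ee_double r b k hr hb). fold c in H.
  pose proof (ee_mono_le r b _ _ hr hb hN). lra.
Qed.

Lemma xx_conv r b : 0 < r -> 0 < b ->
  exists l : R, is_lim_seq (xx r b) l /\ 0 <= l.
Proof.
  intros hr hb.
  set (d := fun N => / ee r b N).
  assert (hd : Un_decreasing d).
  { intro n. unfold d. apply Rinv_le_contravar. apply ee_pos; auto.
    apply ee_mono; auto. }
  assert (hd0 : Un_cv d 0).
  { intros eps heps. destruct (ee_unbounded r b (/ eps) hr hb) as [N0 hN0].
    exists N0. intros n hn. unfold R_dist, d. rewrite Rminus_0_r.
    specialize (hN0 n ltac:(lia)). pose proof (ee_pos r b n hr hb).
    rewrite Rabs_pos_eq by (left; apply Rinv_0_lt_compat; lra).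
    rewrite <- (Rinv_inv eps). apply Rinv_lt_contravar; auto.
    apply Rmult_lt_0_compat; auto. apply Rinv_0_lt_compat; auto. }
  destruct (alternated_series d hd hd0) as [l hl].
  assert (hx : forall N, xx r b (S N) = xx r b 0 + sum_f_R0 (tg_alt d) N).
  { induction N.
    - simpl. unfold tg_alt, d. pose proof (xx_diff r b 0 hr hb). simpl in H. lra.
    - simpl sum_f_R0. rewrite <- Rplus_assoc, <- IHN.
      pose proof (xx_diff r b (S N) hr hb). unfold tg_alt, d. unfold Rdiv in H. lra. }
  assert (hlim : is_lim_seq (xx r b) (xx r b 0 + l)).
  { apply is_lim_seq_incr_1.
    apply is_lim_seq_ext with (fun N => xx r b 0 + sum_f_R0 (tg_alt d) N).
    intro; rewrite hx; auto.
    apply is_lim_seq_plus'. apply is_lim_seq_const.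
    apply is_lim_seq_Reals; auto. }
  exists (xx r b 0 + l). split; auto.
  assert (Rbar_le 0 (xx r b 0 + l)).
  { apply is_lim_seq_le with (fun _ => 0) (xx r b). intro; apply xx_nn; auto.
    apply is_lim_seq_const. auto. }
  simpl in H. auto.
Qed.
Lemma gauge r b Z Z' k : sol r b Z -> sol r (b + 2*r) Z' ->
  k * Z' 1%nat = (2 * INR 0 * r + b + 3*r) * Z 1%nat + 2 * (INR 0 + 1)^2 * r^2 * Z 0%nat ->
  k * Z' 2%nat = (2 * INR 1 * r + b + 3*r) * Z 2%nat + 2 * (INR 1 + 1)^2 * r^2 * Z 1%nat ->
  forall n, k * Z' (S n) =
    (2 * INR n * r + b + 3*r) * Z (S n) + 2 * (INR n + 1)^2 * r^2 * Z n.
Proof.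
  intros hZ hZ' h0 h1.
  assert (forall n, k * Z' (S n) =
    (2 * INR n * r + b + 3*r) * Z (S n) + 2 * (INR n + 1)^2 * r^2 * Z n /\
    k * Z' (S (S n)) =
    (2 * INR (S n) * r + b + 3*r) * Z (S (S n)) + 2 * (INR (S n) + 1)^2 * r^2 * Z (S n)).
  { induction n. split; auto.
    destruct IHn as [A B]. split; auto.
    rewrite (hZ' (S n)).
    replace (k * ((b + 2 * r) * Z' (S (S n)) + (INR (S n) + 1) ^ 2 * r ^ 2 * Z' (S n)))
      with ((b + 2 * r) * (k * Z' (S (S n))) + (INR (S n) + 1) ^ 2 * r ^ 2 * (k * Z' (S n)))
      by ring.
    rewrite A, B. rewrite (hZ (S n)). rewrite (hZ n). rewrite !S_INR. ring. }
  intro n; apply H.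
Qed.

Lemma Eform r b N : 0 < r -> 0 < b ->
  V r b (S N) / (2 * U r b (S N)) + V r (b + 2*r) (S N) / (2 * U r (b+2*r) (S N))
  - 1 / (b + r)
  = (-1)^N * ((INR N + 1)^2 * r^2) * Pa r N /
    (U r b (S N) * ((2 * INR N * r + b + 3*r) * U r b (S N)
                    + 2 * ((INR N + 1)^2 * r^2) * U r b N)).
Proof.
  intros hr hb.
  assert (gU := gauge r b (U r b) (U r (b + 2*r)) (b + r) (sq_sol _ _ _ _) (sq_sol _ _ _ _)).
  assert (gV := gauge r b (fun n => 2 * U r b n - (b + r) * V r b n) (V r (b + 2*r))
                  ((b + r)^2)).
  assert (hs : sol r b (fun n => 2 * U r b n - (b + r) * V r b n)).
  { intro n. unfold U, V. rewrite !sq_sol. ring. }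
  specialize (gV hs (sq_sol _ _ _ _)).
  unfold U, V in gU, gV.
  assert (e1 : forall x, sq r x 1 x 2 = x * x + (INR 0 + 1)^2 * r^2 * 1).
  { intros; reflexivity. }
  assert (e2 : forall x, sq r x 0 1 2 = x * 1 + (INR 0 + 1)^2 * r^2 * 0).
  { intros; reflexivity. }
  rewrite !e1, !sq_1, !sq_0 in gU. rewrite !e1, !e2, !sq_1, !sq_0 in gV.
  simpl INR in gU, gV.
  specialize (gU ltac:(ring) ltac:(ring) N).
  specialize (gV ltac:(ring) ltac:(ring) N).
  fold (U r b) (U r (b + 2*r)) (V r b) (V r (b + 2*r)) in gU, gV.
  pose proof (U_pos r b N hb). pose proof (U_pos r b (S N) hb).
  assert (hb2 : 0 < b + 2 * r) by lra.
  pose proof (U_pos r (b + 2*r) (S N) hb2).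
  pose proof (cas r b N) as hc.
  pose proof (pos_INR N).
  set (u0 := U r b N) in *. set (u1 := U r b (S N)) in *.
  set (v0 := V r b N) in *. set (v1 := V r b (S N)) in *.
  set (u1' := U r (b + 2 * r) (S N)) in *. set (v1' := V r (b + 2 * r) (S N)) in *.
  assert (hv1 : v1 = (u1 * v0 + (-1)^N * Pa r N) / u0).
  { field_simplify_eq; lra. }
  assert (hu1' : u1' = ((2 * INR N * r + b + 3 * r) * u1 + 2 * (INR N + 1) ^ 2 * r ^ 2 * u0) / (b + r)).
  { rewrite <- gU. field. lra. }
  assert (hv1' : v1' = ((2 * INR N * r + b + 3 * r) * (2 * u1 - (b + r) * v1) +
       2 * (INR N + 1) ^ 2 * r ^ 2 * (2 * u0 - (b + r) * v0)) / (b + r)^2).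
  { rewrite <- gV. field. lra. }
  assert (0 < (2 * INR N * r + b + 3 * r) * u1 + 2 * ((INR N + 1) ^ 2 * r ^ 2) * u0).
  { assert (0 < (2 * INR N * r + b + 3 * r) * u1).
    { apply Rmult_lt_0_compat; auto. nra. }
    assert (0 <= 2 * ((INR N + 1) ^ 2 * r ^ 2) * u0).
    { apply Rmult_le_pos; [|lra]. apply Rmult_le_pos. lra.
      apply Rmult_le_pos; apply pow2_ge_0. }
    lra. }
  rewrite hv1', hu1', hv1. field. repeat split; try lra.
Qed.
Lemma dd_lim r b : 0 < r -> 0 < b -> is_lim_seq (fun N => / ee r b N) 0.
Proof.
  intros hr hb. apply is_lim_seq_Reals.
  intros eps heps. destruct (ee_unbounded r b (/ eps) hr hb) as [N0 hN0].
  exists N0. intros n hn. unfold R_dist. rewrite Rminus_0_r.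
  specialize (hN0 n ltac:(lia)). pose proof (ee_pos r b n hr hb).
  rewrite Rabs_pos_eq by (left; apply Rinv_0_lt_compat; lra).
  rewrite <- (Rinv_inv eps). apply Rinv_lt_contravar; auto.
  apply Rmult_lt_0_compat; auto. apply Rinv_0_lt_compat; auto.
Qed.

Lemma inv2x r b N : 0 < b -> 1 / (2 * b + 2 * xx r b N) = V r b (S N) / (2 * U r b (S N)).
Proof.
  intro hb. replace (2 * b + 2 * xx r b N) with (2 * (b + xx r b N)) by ring.
  rewrite xU; auto. pose proof (U_pos r b (S N) hb). pose proof (V_pos r b N hb).
  field. split; lra.
Qed.

Definition EE r b N := 1 / (2 * b + 2 * xx r b N) + 1 / (2 * (b + 2*r) + 2 * xx r (b + 2*r) N)
  - 1 / (b + r).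

Lemma EE_bound r b M : 0 < r -> 0 < b ->
  Rabs (EE r b (S M)) <= / ee r b M / (2 * b^2).
Proof.
  intros hr hb. unfold EE. rewrite inv2x; auto.
  replace (2 * (b + 2 * r) + 2 * xx r (b + 2 * r) (S M)) with
     (2 * (b + 2 * r) + 2 * xx r (b + 2 * r) (S M)) by ring.
  rewrite (inv2x r (b + 2 * r)); [|lra].
  rewrite Eform; auto.
  set (a := (INR (S M) + 1) ^ 2 * r ^ 2).
  set (c := 2 * INR (S M) * r + b + 3 * r).
  set (u2 := U r b (S (S M))). set (u1 := U r b (S M)).
  pose proof (U_pos r b (S (S M)) hb). pose proof (U_pos r b (S M) hb).
  pose proof (V_pos r b (S M) hb). pose proof (V_pos r b M hb).
  pose proof (UbV r b (S (S M)) hb). pose proof (UbV r b (S M) hb).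
  pose proof (Pa_pos r (S M) hr).
  fold u1 u2 in H, H0, H3, H4.
  assert (ha : 0 < a). { unfold a. pose proof (pos_INR (S M)).
    apply Rmult_lt_0_compat; apply pow_lt; lra. }
  assert (hc : 0 < c). { unfold c. pose proof (pos_INR (S M)). nra. }
  replace ((-1) ^ S M * a * Pa r (S M) / (u2 * (c * u2 + 2 * a * u1)))
    with ((-1) ^ S M * (a * Pa r (S M) / (u2 * (c * u2 + 2 * a * u1)))) by (unfold Rdiv; ring).
  rewrite Rabs_mult, pow_1_abs, Rmult_1_l.
  assert (0 < u2 * (c * u2 + 2 * a * u1)).
  { apply Rmult_lt_0_compat; auto. nra. }
  rewrite Rabs_pos_eq.
  2:{ apply Rmult_le_pos. apply Rmult_le_pos; lra. left; apply Rinv_0_lt_compat; auto. }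
  apply Rle_trans with (Pa r (S M) / (2 * u2 * u1)).
  { replace (Pa r (S M) / (2 * u2 * u1)) with (a * Pa r (S M) / (u2 * (2 * a * u1)))
      by (field; repeat split; lra).
    unfold Rdiv. apply Rmult_le_compat_l. apply Rmult_le_pos; lra.
    apply Rinv_le_contravar. apply Rmult_lt_0_compat; auto. nra.
    apply Rmult_le_compat_l. lra. nra. }
  replace (/ ee r b M / (2 * b ^ 2)) with (Pa r (S M) / (2 * (b * V r b (S (S M))) * (b * V r b (S M)))).
  2:{ unfold ee. field. repeat split; lra. }
  unfold Rdiv. apply Rmult_le_compat_l. lra.
  apply Rinv_le_contravar.
  { assert (0 < b * V r b (S (S M))) by nra. assert (0 < b * V r b (S M)) by nra. nra. }
  assert (0 <= b * V r b (S (S M))) by nra. assert (0 <= b * V r b (S M)) by nra.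
  apply Rmult_le_compat; try nra.
Qed.

Lemma core r b : 0 < r -> 0 < b ->
  ex_finite_lim_seq (cf_conv (num_seq r) b) /\ 0 <= cf_val (num_seq r) b /\
  1 / (2 * b + 2 * cf_val (num_seq r) b) + 1 / (2 * (b + 2 * r) + 2 * cf_val (num_seq r) (b + 2 * r))
  = 1 / (b + r).
Proof.
  intros hr hb. assert (hb2 : 0 < b + 2 * r) by lra.
  destruct (xx_conv r b hr hb) as [l [hl hl0]].
  destruct (xx_conv r (b + 2 * r) hr hb2) as [l' [hl' hl0']].
  assert (hv : cf_val (num_seq r) b = l).
  { unfold cf_val. change (Lim_seq (cf_conv (num_seq r) b)) with (Lim_seq (xx r b)).
    rewrite (is_lim_seq_unique _ _ hl). reflexivity. }
  assert (hv' : cf_val (num_seq r) (b + 2 * r) = l').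
  { unfold cf_val. change (Lim_seq (cf_conv (num_seq r) (b + 2 * r))) with (Lim_seq (xx r (b + 2 * r))).
    rewrite (is_lim_seq_unique _ _ hl'). reflexivity. }
  split. exists l. exact hl.
  rewrite hv, hv'. split; auto.
  assert (L1 : forall c x (lx : R), 0 < c -> 0 <= lx -> is_lim_seq x lx ->
      is_lim_seq (fun N => 1 / (2 * c + 2 * x N)) (1 / (2 * c + 2 * lx))).
  { intros c x lx hc hlx hx.
    apply is_lim_seq_ext with (fun N => / (2 * c + 2 * x N)).
    intro; unfold Rdiv; ring.
    replace (1 / (2 * c + 2 * lx)) with (/ (2 * c + 2 * lx)) by (unfold Rdiv; ring).
    change (Finite (/ (2 * c + 2 * lx))) with (Rbar_inv (Finite (2 * c + 2 * lx))).
    apply is_lim_seq_inv.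
    apply is_lim_seq_plus'. apply is_lim_seq_const.
    apply is_lim_seq_mult'. apply is_lim_seq_const. auto.
    intro h; injection h; lra. }
  assert (hE1 : is_lim_seq (EE r b)
     (1 / (2 * b + 2 * l) + 1 / (2 * (b + 2 * r) + 2 * l') - 1 / (b + r))).
  { apply is_lim_seq_minus'. apply is_lim_seq_plus'.
    apply L1; auto. apply L1; auto. apply is_lim_seq_const. }
  assert (hE0 : is_lim_seq (EE r b) 0).
  { apply is_lim_seq_incr_1.
    apply is_lim_seq_le_le with (fun M => - (/ ee r b M / (2 * b^2))) (fun M => / ee r b M / (2 * b^2)).
    - intro M. pose proof (EE_bound r b M hr hb).
      pose proof (Rle_abs (EE r b (S M))).
      pose proof (Rle_abs (- EE r b (S M))). rewrite Rabs_Ropp in H1. lra.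
    - replace (Finite 0) with (Rbar_opp (Finite (0 / (2 * b^2)))) by (simpl; f_equal; field; lra).
      apply -> is_lim_seq_opp. apply is_lim_seq_div'. apply dd_lim; auto.
      apply is_lim_seq_const. assert (0 < b^2) by (apply pow_lt; lra). lra.
    - replace (Finite 0) with (Finite (0 / (2 * b^2))) by (f_equal; field; lra).
      apply is_lim_seq_div'. apply dd_lim; auto.
      apply is_lim_seq_const. assert (0 < b^2) by (apply pow_lt; lra). lra. }
  pose proof (is_lim_seq_unique _ _ hE1). rewrite (is_lim_seq_unique _ _ hE0) in H.
  injection H. lra.
Qed.
Lemma range r s : Rabs (r - 1) < s -> 0 < 1 - r + s /\ 0 < r - 1 + s.
Proof.
  intro h. pose proof (Rle_abs (r - 1)). pose proof (Rle_abs (- (r - 1))).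
  rewrite Rabs_Ropp in H0. lra.
Qed.

Lemma small b c (eps : R) : 0 < eps -> / eps < b -> 0 <= c -> Rabs (1 / (2 * b + 2 * c) - 0) < eps.
Proof.
  intros he hb hc. assert (0 < / eps) by (apply Rinv_0_lt_compat; auto).
  rewrite Rminus_0_r. rewrite Rabs_pos_eq.
  2:{ unfold Rdiv. rewrite Rmult_1_l. left. apply Rinv_0_lt_compat. lra. }
  apply Rle_lt_trans with (/ b).
  { unfold Rdiv. rewrite Rmult_1_l. apply Rinv_le_contravar; lra. }
  rewrite <- (Rinv_inv eps). apply Rinv_lt_contravar; auto. nra.
Qed.

Lemma uniq (f h : R -> R) (D T : R) (G : R -> R) : 0 < T ->
  (forall s, D < s -> f s + f (s + T) = G s) ->
  (forall s, D < s -> h s + h (s + T) = G s) ->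
  is_lim f p_infty 0 -> is_lim h p_infty 0 ->
  forall s, D < s -> f s = h s.
Proof.
  intros hT hf hh lf lh s hs.
  destruct (Req_dec (f s - h s) 0) as [e|ne]; [lra|].
  exfalso.
  assert (hp : 0 < Rabs (f s - h s) / 2).
  { pose proof (Rabs_pos_lt _ ne). lra. }
  apply is_lim_spec in lf. apply is_lim_spec in lh. simpl in lf, lh.
  destruct (lf (mkposreal _ hp)) as [M1 h1].
  destruct (lh (mkposreal _ hp)) as [M2 h2]. simpl in h1, h2.
  assert (key : forall n, Rabs (f (s + INR n * T) - h (s + INR n * T)) = Rabs (f s - h s)).
  { induction n.
    - simpl. rewrite Rmult_0_l, Rplus_0_r. auto.
    - rewrite S_INR. pose proof (pos_INR n).
      assert (D < s + INR n * T) by nra.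
      specialize (hf _ H0). specialize (hh _ H0).
      replace (s + (INR n + 1) * T) with (s + INR n * T + T) by ring.
      replace (f (s + INR n * T + T) - h (s + INR n * T + T)) with
        (- (f (s + INR n * T) - h (s + INR n * T))) by lra.
      rewrite Rabs_Ropp. auto. }
  destruct (INR_archimed T (Rmax M1 M2 - s) hT) as [n hn].
  specialize (key n).
  assert (M1 < s + INR n * T) by (pose proof (Rmax_l M1 M2); lra).
  assert (M2 < s + INR n * T) by (pose proof (Rmax_r M1 M2); lra).
  specialize (h1 _ H). specialize (h2 _ H0).
  rewrite Rminus_0_r in h1, h2.
  pose proof (Rabs_triang (f (s + INR n * T)) (- h (s + INR n * T))).
  rewrite Rabs_Ropp in H1. replace (f (s + INR n * T) + - h (s + INR n * T)) with (f (s + INR n * T) - h (s + INR n * T)) in H1 by ring. lra.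
Qed.

Theorem corollary3 (r : R) (hr : 0 < r) :
  (* both continued fractions converge on the range s > |r-1| *)
  (forall s, Rabs (r - 1) < s ->
     ex_finite_lim_seq (cf_conv (num_seq r) (1 - r + s)) /\
     ex_finite_lim_seq (cf_conv (num_seq r) (r - 1 + s))) /\
  (* f1: the formula solves the equation, tends to 0, and is the unique such solution *)
  ((forall s, Rabs (r - 1) < s ->
      f1_sol r s + f1_sol r (s + 2 * r) = 1 / (s + 1)) /\
   is_lim (f1_sol r) p_infty 0 /\
   (forall f : R -> R,
      (forall s, Rabs (r - 1) < s -> f s + f (s + 2 * r) = 1 / (s + 1)) ->
      is_lim f p_infty 0 ->
      forall s, Rabs (r - 1) < s -> f s = f1_sol r s)) /\
  (* f2: likewise *)
  ((forall s, Rabs (r - 1) < s ->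
      f2_sol r s + f2_sol r (s + 2 * r) = 1 / (s + 2 * r - 1)) /\
   is_lim (f2_sol r) p_infty 0 /\
   (forall f : R -> R,
      (forall s, Rabs (r - 1) < s -> f s + f (s + 2 * r) = 1 / (s + 2 * r - 1)) ->
      is_lim f p_infty 0 ->
      forall s, Rabs (r - 1) < s -> f s = f2_sol r s)).
Proof.
  assert (E1 : forall s, Rabs (r - 1) < s ->
      f1_sol r s + f1_sol r (s + 2 * r) = 1 / (s + 1)).
  { intros s hs. destruct (range r s hs) as [h1 h2].
    destruct (core r (1 - r + s) hr h1) as [_ [_ e]].
    unfold f1_sol.
    replace (2 - 2 * r + 2 * s) with (2 * (1 - r + s)) by ring.
    replace (2 - 2 * r + 2 * (s + 2 * r)) with (2 * (1 - r + s + 2 * r)) by ring.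
    replace (1 - r + (s + 2 * r)) with (1 - r + s + 2 * r) by ring.
    replace (s + 1) with (1 - r + s + r) by ring. exact e. }
  assert (E2 : forall s, Rabs (r - 1) < s ->
      f2_sol r s + f2_sol r (s + 2 * r) = 1 / (s + 2 * r - 1)).
  { intros s hs. destruct (range r s hs) as [h1 h2].
    destruct (core r (r - 1 + s) hr h2) as [_ [_ e]].
    unfold f2_sol.
    replace (2 * r - 2 + 2 * s) with (2 * (r - 1 + s)) by ring.
    replace (2 * r - 2 + 2 * (s + 2 * r)) with (2 * (r - 1 + s + 2 * r)) by ring.
    replace (r - 1 + (s + 2 * r)) with (r - 1 + s + 2 * r) by ring.
    replace (s + 2 * r - 1) with (r - 1 + s + r) by ring. exact e. }
  assert (L1 : is_lim (f1_sol r) p_infty 0).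
  { apply is_lim_spec. simpl. intro eps.
    exists (Rmax (Rabs (r - 1)) (r - 1 + / eps)). intros s hs.
    assert (Rabs (r - 1) < s) by (pose proof (Rmax_l (Rabs (r - 1)) (r - 1 + / eps)); lra).
    destruct (range r s H) as [h1 h2].
    destruct (core r (1 - r + s) hr h1) as [_ [hc _]].
    unfold f1_sol. replace (2 - 2 * r + 2 * s) with (2 * (1 - r + s)) by ring.
    apply small; auto. apply cond_pos.
    pose proof (Rmax_r (Rabs (r - 1)) (r - 1 + / eps)); lra. }
  assert (L2 : is_lim (f2_sol r) p_infty 0).
  { apply is_lim_spec. simpl. intro eps.
    exists (Rmax (Rabs (r - 1)) (1 - r + / eps)). intros s hs.
    assert (Rabs (r - 1) < s) by (pose proof (Rmax_l (Rabs (r - 1)) (1 - r + / eps)); lra).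
    destruct (range r s H) as [h1 h2].
    destruct (core r (r - 1 + s) hr h2) as [_ [hc _]].
    unfold f2_sol. replace (2 * r - 2 + 2 * s) with (2 * (r - 1 + s)) by ring.
    apply small; auto. apply cond_pos.
    pose proof (Rmax_r (Rabs (r - 1)) (1 - r + / eps)); lra. }
  split; [|split; split].
  - intros s hs. destruct (range r s hs) as [h1 h2].
    split; [apply (core r _ hr h1) | apply (core r _ hr h2)].
  - exact E1.
  - split; [exact L1|].
    intros f hf lf s hs.
    apply (uniq f (f1_sol r) (Rabs (r - 1)) (2 * r) (fun s => 1 / (s + 1))); auto; lra.
  - exact E2.
  - split; [exact L2|].
    intros f hf lf s hs.
    apply (uniq f (f2_sol r) (Rabs (r - 1)) (2 * r) (fun s => 1 / (s + 2 * r - 1))); auto; lra.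
Qed.
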